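(* Let $\phi:[0,\infty)\to\mathbb R$ be convex, differentiable and bounded below, with $\phi'(0)<0$, and let $c_{II}\in(0,1)$ and $\rho_0>0$. Consider the following interval-based bisection line search: set $\rho_L=0$, $\rho_U=\infty$, and for $i=0,1,2,\dots$: if $|\phi'(\rho_i)|\le -c_{II}\phi'(0)$, stop and output $\rho^*=\rho_i$; otherwise, if $\phi'(\rho_i)>0$ set $\rho_U=\rho_i$, and if $\phi'(\rho_i)<0$ set $\rho_L=\rho_i$; then set $\rho_{i+1}=2\rho_L$ if $\rho_U=\infty$, and $\rho_{i+1}=\frac12(\rho_L+\rho_U)$ otherwise. Then this procedure stops after finitely many iterations, and its output $\rho^*$ satisfies the strong Wolfe condition $|\phi'(\rho^* )|\le -c_{II}\phi'(0)$.
   Context: In the application, $\phi(\rho)=\mathcal F(h_t+\rho z_t)$ for a convex differentiable objective $\mathcal F$ and a descent direction $z_t$, but the statement concerns an arbitrary $\phi$ as described. *)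

(* Defs.v *)
From Stdlib Require Import Reals Lra.
From Coquelicot Require Import Coquelicot.
Open Scope R_scope.

(* State of the interval-based bisection line search:
   (rho_L, rho_U, rho_i) where rho_U = None encodes rho_U = +infinity. *)
Record ls_state := LS { ls_L : R; ls_U : option R; ls_rho : R }.

Definition strong_wolfe (dphi : R -> R) (c rho : R) : Prop :=
  Rabs (dphi rho) <= - c * dphi 0.

(* One update of the algorithm (performed when the stopping test fails). *)
Definition ls_step (dphi : R -> R) (s : ls_state) : ls_state :=
  let r := ls_rho s in
  let L' := if Rlt_dec (dphi r) 0 then r else ls_L s in
  let U' := if Rlt_dec 0 (dphi r) then Some r else ls_U s in
  let r' := match U' with
            | None => 2 * L'
            | Some u => (L' + u) / 2
            end in
  LS L' U' r'.

Definition ls_iter (dphi : R -> R) (rho0 : R) (i : nat) : ls_state :=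
  Nat.iter i (ls_step dphi) (LS 0 None rho0).

Definition ls_rho_i (dphi : R -> R) (rho0 : R) (i : nat) : R :=
  ls_rho (ls_iter dphi rho0 i).

Definition convex_on_nonneg (phi : R -> R) : Prop :=
  forall x y t, 0 <= x -> 0 <= y -> 0 <= t <= 1 ->
    phi (t * x + (1 - t) * y) <= t * phi x + (1 - t) * phi y.

Definition is_derive_on_nonneg (phi dphi : R -> R) : Prop :=
  (forall x, 0 < x -> is_derive phi x (dphi x)) /\
  filterlim (fun h => (phi h - phi 0) / h) (at_right 0) (locally (dphi 0)).

(* Main.v *)
Require Import Defs.
From Stdlib Require Import Reals Lra Classical Arith Lia.
From Coquelicot Require Import Coquelicot.
Open Scope R_scope.

Definition Good (phi dphi : R -> R) := convex_on_nonneg phi /\ is_derive_on_nonneg phi dphi.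

Lemma Dplus phi dphi x : Good phi dphi -> 0 <= x ->
  forall eps, 0 < eps -> exists d, 0 < d /\ forall h, 0 < h < d ->
    Rabs ((phi (x + h) - phi x) / h - dphi x) < eps.
Proof.
  intros [_ [Hd H0]] Hx eps Heps.
  destruct (Rle_lt_or_eq_dec 0 x Hx) as [Hp|Hz].
  - destruct (proj1 (is_derive_Reals _ _ _) (Hd x Hp) eps Heps) as [d Hdd].
    exists d. split. apply cond_pos. intros h [h1 h2].
    apply Hdd. lra. rewrite Rabs_pos_eq; lra.
  - subst x.
    destruct (proj1 (filterlim_locally _ _) H0 (mkposreal eps Heps)) as [d Hdd].
    exists d. split. apply cond_pos. intros h [h1 h2].
    specialize (Hdd h).
    assert (B : ball 0 d h).
    { change (Rabs (h - 0) < d). rewrite Rminus_0_r, Rabs_pos_eq by lra. lra. }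
    rewrite Rplus_0_l. exact (Hdd B h1).
Qed.

Lemma Dminus phi dphi x : Good phi dphi -> 0 < x ->
  forall eps, 0 < eps -> exists d, 0 < d /\ forall h, 0 < h < d ->
    Rabs ((phi x - phi (x - h)) / h - dphi x) < eps.
Proof.
  intros [_ [Hd H0]] Hx eps Heps.
  destruct (proj1 (is_derive_Reals _ _ _) (Hd x Hx) eps Heps) as [d Hdd].
  exists d. split. apply cond_pos. intros h [h1 h2].
  specialize (Hdd (- h)).
  replace ((phi x - phi (x - h)) / h) with ((phi (x + - h) - phi x) / - h).
  apply Hdd. lra. rewrite Rabs_Ropp, Rabs_pos_eq; lra.
  unfold Rminus. field. lra.
Qed.

Lemma div_le A h S : 0 < h -> A <= h * S -> A / h <= S.
Proof.
  intros Hh HA. unfold Rdiv.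
  apply Rle_trans with (h * S * / h).
  apply Rmult_le_compat_r. left; apply Rinv_0_lt_compat; lra. exact HA.
  right. field. lra.
Qed.

Lemma div_ge A h S : 0 < h -> h * S <= A -> S <= A / h.
Proof.
  intros Hh HA. unfold Rdiv.
  apply Rle_trans with (h * S * / h).
  right. field. lra.
  apply Rmult_le_compat_r. left; apply Rinv_0_lt_compat; lra. exact HA.
Qed.

Lemma T1 phi dphi x y : Good phi dphi -> 0 <= x -> x < y ->
  dphi x * (y - x) <= phi y - phi x.
Proof.
  intros G Hx Hxy.
  set (S := (phi y - phi x) / (y - x)).
  assert (HS : phi y - phi x = (y - x) * S) by (unfold S; field; lra).
  rewrite HS.
  destruct (Rle_or_lt (dphi x) S) as [Hle|Hlt].
  { rewrite Rmult_comm. apply Rmult_le_compat_l; lra. }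
  exfalso.
  destruct (Dplus phi dphi x G Hx (dphi x - S)) as [d [Hd Hq]]. lra.
  set (h := Rmin d (y - x) / 2).
  assert (Hh1 : 0 < h) by (unfold h; apply Rmin_case; lra).
  assert (Hh2 : h < d) by (unfold h; generalize (Rmin_l d (y - x)); lra).
  assert (Hh3 : h < y - x) by (unfold h; generalize (Rmin_r d (y - x)); lra).
  specialize (Hq h (conj Hh1 Hh2)).
  set (lam := h / (y - x)).
  assert (Hl : 0 <= 1 - lam <= 1).
  { unfold lam. split.
    - apply Rle_trans with (1 - (y - x) / (y - x)). right; field; lra.
      apply Rplus_le_compat_l, Ropp_le_contravar. unfold Rdiv.
      apply Rmult_le_compat_r. left; apply Rinv_0_lt_compat; lra. lra.
    - assert (0 <= h / (y - x)). { unfold Rdiv. apply Rmult_le_pos. lra. left; apply Rinv_0_lt_compat; lra. } lra. }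
  pose proof (proj1 G x y (1 - lam) Hx ltac:(lra) Hl) as C.
  replace ((1 - lam) * x + (1 - (1 - lam)) * y) with (x + h) in C
    by (unfold lam; field; lra).
  assert (C2 : phi (x + h) - phi x <= h * S).
  { replace (h * S) with (lam * (phi y - phi x)) by (unfold lam; rewrite HS; field; lra). lra. }
  apply div_le in C2; [|lra].
  apply Rabs_lt_between in Hq. lra.
Qed.

Lemma T2 phi dphi x y : Good phi dphi -> 0 <= x -> x < y ->
  phi y - phi x <= dphi y * (y - x).
Proof.
  intros G Hx Hxy.
  set (S := (phi y - phi x) / (y - x)).
  assert (HS : phi y - phi x = (y - x) * S) by (unfold S; field; lra).
  rewrite HS.
  destruct (Rle_or_lt S (dphi y)) as [Hle|Hlt].
  { rewrite Rmult_comm. apply Rmult_le_compat_r; lra. }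
  exfalso.
  destruct (Dminus phi dphi y G ltac:(lra) (S - dphi y)) as [d [Hd Hq]]. lra.
  set (h := Rmin d (y - x) / 2).
  assert (Hh1 : 0 < h) by (unfold h; apply Rmin_case; lra).
  assert (Hh2 : h < d) by (unfold h; generalize (Rmin_l d (y - x)); lra).
  assert (Hh3 : h < y - x) by (unfold h; generalize (Rmin_r d (y - x)); lra).
  specialize (Hq h (conj Hh1 Hh2)).
  set (lam := h / (y - x)).
  assert (Hl : 0 <= lam <= 1).
  { unfold lam. split.
    - unfold Rdiv. apply Rmult_le_pos. lra. left; apply Rinv_0_lt_compat; lra.
    - apply Rle_trans with ((y - x) / (y - x)). unfold Rdiv.
      apply Rmult_le_compat_r. left; apply Rinv_0_lt_compat; lra. lra.
      right; field; lra. }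
  pose proof (proj1 G x y lam Hx ltac:(lra) Hl) as C.
  replace (lam * x + (1 - lam) * y) with (y - h) in C
    by (unfold lam; field; lra).
  assert (C2 : h * S <= phi y - phi (y - h)).
  { replace (h * S) with (lam * (phi y - phi x)) by (unfold lam; rewrite HS; field; lra). lra. }
  apply div_ge in C2; [|lra].
  apply Rabs_lt_between in Hq. lra.
Qed.

Lemma mono phi dphi x y : Good phi dphi -> 0 <= x -> x <= y -> dphi x <= dphi y.
Proof.
  intros G Hx Hxy. destruct (Rle_lt_or_eq_dec _ _ Hxy) as [H|H]; [|subst; lra].
  pose proof (T1 phi dphi x y G Hx H). pose proof (T2 phi dphi x y G Hx H).
  apply Rmult_le_reg_r with (y - x). lra. lra.
Qed.

Lemma RC phi dphi x : Good phi dphi -> 0 <= x -> forall eps, 0 < eps ->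
  exists d, 0 < d /\ forall y, x < y < x + d -> dphi y < dphi x + eps.
Proof.
  intros G Hx eps Heps.
  destruct (Dplus phi dphi x G Hx (eps / 2)) as [d [Hd Hq]]. lra.
  set (h := d / 2).
  specialize (Hq h ltac:(unfold h; lra)).
  apply Rabs_lt_between in Hq.
  exists (h / 2). split. unfold h; lra.
  intros y [Hy1 Hy2].
  set (z := x + h).
  assert (E1 : phi z - phi x < (dphi x + eps / 2) * h).
  { destruct Hq as [_ Hq]. unfold z.
    assert (phi (x + h) - phi x = ((phi (x + h) - phi x) / h) * h) by (field; unfold h; lra).
    rewrite H. apply Rmult_lt_compat_r. unfold h; lra. lra. }
  pose proof (T1 phi dphi x y G Hx Hy1) as E2.
  pose proof (T1 phi dphi y z G ltac:(lra) ltac:(unfold z; lra)) as E3.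
  assert (E4 : dphi y * (z - y) < (dphi x + eps) * (z - y)).
  { assert (dphi x * (z - y) + eps / 2 * h <= (dphi x + eps) * (z - y)).
    { unfold z. assert (eps / 2 * h <= eps * (x + h - y)).
      { replace (eps / 2 * h) with (eps * (h / 2)) by field.
        apply Rmult_le_compat_l; lra. }
      lra. }
    assert (dphi x * (z - x) = dphi x * (z - y) + dphi x * (y - x)) by ring.
    unfold z in *. lra. }
  apply Rmult_lt_reg_r in E4; [lra|unfold z; lra].
Qed.

Lemma LC phi dphi x : Good phi dphi -> 0 < x -> forall eps, 0 < eps ->
  exists d, 0 < d /\ forall y, x - d < y < x -> dphi x - eps < dphi y.
Proof.
  intros G Hx eps Heps.
  destruct (Dminus phi dphi x G Hx (eps / 2)) as [d [Hd Hq]]. lra.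
  set (h := Rmin d x / 2).
  assert (Hh1 : 0 < h) by (unfold h; apply Rmin_case; lra).
  assert (Hh2 : h < d) by (unfold h; generalize (Rmin_l d x); lra).
  assert (Hh3 : h < x) by (unfold h; generalize (Rmin_r d x); lra).
  specialize (Hq h (conj Hh1 Hh2)).
  apply Rabs_lt_between in Hq.
  exists (h / 2). split. lra.
  intros y [Hy1 Hy2].
  set (z := x - h).
  assert (E1 : (dphi x - eps / 2) * h < phi x - phi z).
  { destruct Hq as [Hq _]. unfold z.
    assert (phi x - phi (x - h) = ((phi x - phi (x - h)) / h) * h) by (field; lra).
    rewrite H. apply Rmult_lt_compat_r. lra. lra. }
  pose proof (T2 phi dphi y x G ltac:(unfold z in *; lra) Hy2) as E2.
  pose proof (T2 phi dphi z y G ltac:(unfold z; lra) ltac:(unfold z; lra)) as E3.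
  assert (E4 : (dphi x - eps) * (y - z) < dphi y * (y - z)).
  { assert ((dphi x - eps) * (y - z) <= dphi x * (y - z) - eps / 2 * h).
    { unfold z. assert (eps / 2 * h <= eps * (y - (x - h))).
      { replace (eps / 2 * h) with (eps * (h / 2)) by field.
        apply Rmult_le_compat_l; lra. }
      lra. }
    assert (dphi x * (x - z) = dphi x * (y - z) + dphi x * (x - y)) by ring.
    unfold z in *. lra. }
  apply Rmult_lt_reg_r in E4; [lra|unfold z; lra].
Qed.

Definition getU (s : ls_state) := match ls_U s with Some u => u | None => 0 end.

Definition Inv1 dphi a s := ls_U s = None /\ 0 <= ls_L s < ls_rho s /\ dphi (ls_L s) < -a.
Definition Inv2 dphi a s w := ls_U s = Some (getU s) /\ 0 <= ls_L s /\ getU s - ls_L s = w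
  /\ 0 < w /\ dphi (ls_L s) < -a /\ a < dphi (getU s) /\ ls_rho s = (ls_L s + getU s) / 2.

Lemma step1 dphi a s : 0 < a -> Inv1 dphi a s -> a < Rabs (dphi (ls_rho s)) ->
  Inv1 dphi a (ls_step dphi s) \/ Inv2 dphi a (ls_step dphi s) (ls_rho s - ls_L s).
Proof.
  intros Ha [HU [HL Hd]] Hw. destruct s as [L U r]; simpl in *. subst U.
  unfold ls_step, Inv1, Inv2, getU; simpl.
  destruct (Rlt_dec (dphi r) 0) as [H1|H1]; destruct (Rlt_dec 0 (dphi r)) as [H2|H2]; simpl.
  - lra.
  - left. rewrite Rabs_left in Hw by lra. repeat split; lra.
  - right. rewrite Rabs_pos_eq in Hw by lra. repeat split; lra.
  - exfalso. assert (dphi r = 0) by lra. rewrite H, Rabs_R0 in Hw. lra.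
Qed.

Lemma step2 dphi a s w : 0 < a -> Inv2 dphi a s w -> a < Rabs (dphi (ls_rho s)) ->
  Inv2 dphi a (ls_step dphi s) (w / 2) /\ ls_L s <= ls_L (ls_step dphi s)
  /\ getU (ls_step dphi s) <= getU s.
Proof.
  intros Ha [HU [HL [Hw0 [Hwp [Hd1 [Hd2 Hr]]]]]] Hw. destruct s as [L U r]; unfold getU in *; simpl in *.
  rewrite HU in *. set (u := match U with Some u => u | None => 0 end) in *. clearbody u.
  subst r.
  unfold ls_step, Inv2, getU; simpl.
  destruct (Rlt_dec (dphi ((L + u) / 2)) 0) as [H1|H1];
    destruct (Rlt_dec 0 (dphi ((L + u) / 2))) as [H2|H2]; simpl.
  - lra.
  - rewrite Rabs_left in Hw by lra. repeat split; lra.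
  - rewrite Rabs_pos_eq in Hw by lra. repeat split; lra.
  - exfalso. assert (dphi ((L + u) / 2) = 0) by lra. rewrite H, Rabs_R0 in Hw. lra.
Qed.

Lemma pow2_ge n : INR n + 1 <= 2 ^ n.
Proof.
  induction n as [|n IH]. simpl; lra. rewrite S_INR. simpl.
  assert (1 <= 2 ^ n) by (apply pow_R1_Rle; lra). lra.
Qed.

Lemma least (P : nat -> Prop) : (exists n, P n) -> exists n, P n /\ forall k, (k < n)%nat -> ~ P k.
Proof.
  intros [n Hn]. revert Hn. induction n as [n IH] using (well_founded_induction Nat.lt_wf_0). intros Hn.
  destruct (classic (exists k, (k < n)%nat /\ P k)) as [[k [Hk Pk]]|Hno].
  - exact (IH k Hk Pk).
  - exists n. split. exact Hn. intros k Hk Pk. apply Hno. eauto.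
Qed.

Lemma step_none dphi a s : 0 < a -> ls_U s = None -> ls_U (ls_step dphi s) = None ->
  a < Rabs (dphi (ls_rho s)) ->
  dphi (ls_rho s) < -a /\ ls_rho (ls_step dphi s) = 2 * ls_rho s.
Proof.
  intros Ha HU HU' Hw. destruct s as [L U r]; simpl in *. subst U.
  unfold ls_step in *; simpl in *.
  destruct (Rlt_dec (dphi r) 0) as [H1|H1]; destruct (Rlt_dec 0 (dphi r)) as [H2|H2]; simpl in *;
    try discriminate.
  - rewrite Rabs_left in Hw by lra. split; lra.
  - exfalso. assert (dphi r = 0) by lra. rewrite H, Rabs_R0 in Hw. lra.
Qed.

Lemma iterS dphi rho0 n : ls_iter dphi rho0 (S n) = ls_step dphi (ls_iter dphi rho0 n).
Proof. reflexivity. Qed.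

Theorem theorem4 (phi dphi : R -> R) (cII rho0 : R) :
  convex_on_nonneg phi ->
  is_derive_on_nonneg phi dphi ->
  (exists m, forall x, 0 <= x -> m <= phi x) ->
  dphi 0 < 0 ->
  0 < cII < 1 ->
  0 < rho0 ->
  exists n : nat,
    strong_wolfe dphi cII (ls_rho_i dphi rho0 n) /\
    (forall k : nat, (k < n)%nat -> ~ strong_wolfe dphi cII (ls_rho_i dphi rho0 k)).
Proof.
  intros cvx der [m Hm] Hd0 Hc Hr0.
  assert (G : Good phi dphi) by (split; assumption).
  set (a := - cII * dphi 0).
  assert (Ha : 0 < a) by (unfold a; nra).
  assert (Ha0 : dphi 0 < - a) by (unfold a; nra).
  apply least. apply NNPP; intro NE.
  assert (NW : forall n, a < Rabs (dphi (ls_rho (ls_iter dphi rho0 n)))).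
  { intro n. apply Rnot_le_lt. intro H. apply NE. exists n. exact H. }
  set (s := ls_iter dphi rho0).
  assert (INV : forall n, Inv1 dphi a (s n) \/ exists w, Inv2 dphi a (s n) w).
  { induction n as [|n IH].
    - left. unfold s, Inv1; simpl. repeat split; lra.
    - unfold s; rewrite iterS; fold s. destruct IH as [I1|[w I2]].
      + destruct (step1 dphi a (s n) Ha I1 (NW n)) as [J|J]; [left|right; eexists]; exact J.
      + right. eexists. exact (proj1 (step2 dphi a (s n) w Ha I2 (NW n))). }
  destruct (classic (forall n, ls_U (s n) = None)) as [AllN|NotAll].
  -
    assert (SN : forall n, dphi (ls_rho (s n)) < -a /\ ls_rho (s (S n)) = 2 * ls_rho (s n)).
    { intro n. apply (step_none dphi a (s n) Ha (AllN n) (AllN (S n)) (NW n)). }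
    assert (RH : forall n, ls_rho (s n) = rho0 * 2 ^ n).
    { induction n as [|n IH]. unfold s; simpl; ring. rewrite (proj2 (SN n)), IH. simpl. ring. }
    destruct (INR_archimed (a * rho0) (phi 0 - m)) as [n Hn]. nra.
    pose proof (pow2_ge n) as P2.
    assert (Hrho : rho0 * (INR n + 1) <= ls_rho (s n)).
    { rewrite RH. apply Rmult_le_compat_l; lra. }
    assert (0 < ls_rho (s n)) by (pose proof (pos_INR n); nra).
    pose proof (T2 phi dphi 0 (ls_rho (s n)) G ltac:(lra) H) as E.
    pose proof (proj1 (SN n)) as D.
    pose proof (Hm (ls_rho (s n)) ltac:(lra)) as M.
    assert (dphi (ls_rho (s n)) * (ls_rho (s n) - 0) <= - a * ls_rho (s n)) by nra.
    assert (a * (rho0 * (INR n + 1)) <= a * ls_rho (s n)) by (apply Rmult_le_compat_l; lra).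
    nra.
  - apply not_all_ex_not in NotAll. destruct NotAll as [N HN].
    destruct (INV N) as [[HU _]|[w0 I0]]; [contradiction|].
    set (t := fun k => s (N + k)%nat).
    assert (tS : forall k, t (S k) = ls_step dphi (t k)).
    { intro k. unfold t, s. rewrite Nat.add_succ_r. reflexivity. }
    assert (TI : forall k, Inv2 dphi a (t k) (w0 / 2 ^ k)).
    { induction k as [|k IH].
      - unfold t. rewrite Nat.add_0_r. replace (w0 / 2 ^ 0) with w0 by (simpl; field). exact I0.
      - rewrite tS. replace (w0 / 2 ^ S k) with (w0 / 2 ^ k / 2) by (simpl; field; apply pow_nonzero; lra).
        apply (step2 dphi a (t k) _ Ha IH). unfold t, s. apply NW. }
    assert (TM : forall k, ls_L (t k) <= ls_L (t (S k)) /\ getU (t (S k)) <= getU (t k)).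
    { intro k. rewrite tS. apply (step2 dphi a (t k) (w0 / 2 ^ k) Ha (TI k)). unfold t, s. apply NW. }
    assert (TM2 : forall j k, (j <= k)%nat -> ls_L (t j) <= ls_L (t k) /\ getU (t k) <= getU (t j)).
    { intros j k Hjk. induction Hjk as [|k Hjk IH]. lra.
      destruct (TM k). lra. }
    assert (LU : forall k, ls_L (t k) < getU (t k)).
    { intro k. destruct (TI k) as [_ [_ [E [P _]]]]. lra. }
    assert (LUjk : forall j k, ls_L (t j) <= getU (t k)).
    { intros j k. destruct (Nat.le_ge_cases j k) as [H|H].
      - destruct (TM2 j k H). pose proof (LU k). lra.
      - destruct (TM2 k j H). pose proof (LU j). lra. }
    set (E := fun x => exists k, x = ls_L (t k)).
    assert (Eb : bound E).
    { exists (getU (t 0%nat)). intros x [k ->]. apply LUjk. }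
    assert (Ene : exists x, E x) by (exists (ls_L (t 0%nat)); exists 0%nat; reflexivity).
    destruct (completeness E Eb Ene) as [xs [Hub Hlub]].
    assert (Lx : forall k, ls_L (t k) <= xs) by (intro k; apply Hub; exists k; reflexivity).
    assert (xU : forall k, xs <= getU (t k)).
    { intro k. apply Hlub. intros x [j ->]. apply LUjk. }
    assert (Hx0 : 0 <= xs).
    { pose proof (Lx 0%nat). destruct (TI 0%nat) as [_ [P _]]. lra. }
    assert (CT : exists d, 0 < d /\
      (forall y, xs <= y < xs + d -> dphi y < dphi xs + a) /\
      (forall y, 0 <= y -> xs - d < y <= xs -> dphi xs - a < dphi y)).
    { destruct (RC phi dphi xs G Hx0 a Ha) as [dR [HdR HR]].
      destruct (Rle_lt_or_eq_dec 0 xs Hx0) as [Hp|Hz].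
      - destruct (LC phi dphi xs G Hp a Ha) as [dL [HdL HL]].
        exists (Rmin dR dL). split. apply Rmin_case; lra.
        pose proof (Rmin_l dR dL). pose proof (Rmin_r dR dL).
        split; intros y Hy.
        + destruct (Rle_lt_or_eq_dec _ _ (proj1 Hy)) as [H1|H1]. apply HR; lra. subst; lra.
        + intros Hy2. destruct (Rle_lt_or_eq_dec _ _ (proj2 Hy2)) as [H1|H1]. apply HL; lra. subst; lra.
      - exists dR. split. lra. split; intros y Hy.
        + destruct (Rle_lt_or_eq_dec _ _ (proj1 Hy)) as [H1|H1]. apply HR; lra. subst; lra.
        + intros Hy2. assert (y = xs) by lra. subst; lra. }
    destruct CT as [d [Hd [CR CL]]].
    destruct (INR_archimed d w0) as [k Hk]. lra.
    destruct (TI k) as [_ [HL0 [Hw [Hwp [DL [DU _]]]]]].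
    assert (Hwd : w0 / 2 ^ k < d).
    { pose proof (pow2_ge k). assert (0 < 2 ^ k) by (apply pow_lt; lra).
      apply Rmult_lt_reg_r with (2 ^ k). lra.
      replace (w0 / 2 ^ k * 2 ^ k) with w0 by (field; lra).
      assert (INR k * d <= 2 ^ k * d) by (apply Rmult_le_compat_r; lra). lra. }
    pose proof (Lx k). pose proof (xU k).
    pose proof (CR (getU (t k)) ltac:(lra)).
    pose proof (CL (ls_L (t k)) HL0 ltac:(lra)).
    lra.
Qed.
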